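(* Let $\mathcal{P}_n$ be a geometric lattice of rank two with $n$ atoms (the lattice of flats of the uniform matroid $U_{2,n}$). Then $\mathcal{M}(\mathcal{P}_n,t)=(t^2-nt+1)(t+1)^2(t-1)^2$.
   Context: $\mathcal{P}_n$ consists of $\hat 0$ (rank 0), $n$ atoms (rank 1) and $\hat 1$ (rank 2). For a finite ranked poset $\mathcal{P}$, $\mathrm{rk}(\mathcal{P})$ is the maximum rank and $\rho(x,y,z)=3\,\mathrm{rk}(\mathcal{P})-\mathrm{rk}(x)-\mathrm{rk}(y)-\mathrm{rk}(z)$. Let $\delta_3(x,y,z)=1$ if $x=y=z$ and $0$ otherwise, and $J$ the unique integer-valued function on triples $x\le y\le z$ with $\sum_{x\le a\le y\le b\le z}J(a,y,b)=\delta_3(x,y,z)$ for all $x\le y\le z$. Then $\mathcal{M}(\mathcal{P},t)=\sum_{x\le y\le z}J(x,y,z)\,t^{\rho(x,y,z)}$. *)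

(* Defs.v *)
From mathcomp Require Import all_boot all_order all_algebra.
Set Implicit Arguments. Unset Strict Implicit. Unset Printing Implicit Defensive.
Import GRing.Theory.
Local Open Scope ring_scope.

(* The poset P_n, carried by 'I_(n+2):
   0 is \hat 0 (rank 0), 1..n are the n atoms (rank 1), n+1 is \hat 1 (rank 2). *)
Definition Pn (n : nat) := 'I_n.+2.

Definition pn_le (n : nat) (x y : Pn n) : bool :=
  [|| x == y, val x == 0%N | val y == n.+1].

Definition pn_rk (n : nat) (x : Pn n) : nat :=
  if val x == 0%N then 0%N else if val x == n.+1 then 2%N else 1%N.

Definition pn_rkP (n : nat) : nat := (\max_(x : Pn n) pn_rk x)%N.

Definition pn_rho (n : nat) (x y z : Pn n) : nat :=
  (3 * pn_rkP n - pn_rk x - pn_rk y - pn_rk z)%N.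

Definition delta3 (n : nat) (x y z : Pn n) : int :=
  ((x == y) && (y == z))%:R.

Definition IsJ (n : nat) (J : Pn n -> Pn n -> Pn n -> int) : Prop :=
  forall x y z : Pn n, pn_le x y -> pn_le y z ->
    \sum_(a : Pn n | pn_le x a && pn_le a y)
      \sum_(b : Pn n | pn_le y b && pn_le b z) J a y b = delta3 x y z.

Definition Mpoly (n : nat) (J : Pn n -> Pn n -> Pn n -> int) : {poly int} :=
  \sum_(x : Pn n) \sum_(y : Pn n) \sum_(z : Pn n | pn_le x y && pn_le y z)
     (J x y z)%:P * 'X^(pn_rho x y z).

(* Main.v *)
Require Import Defs.
From mathcomp Require Import all_boot all_order all_algebra.
From mathcomp Require Import zify ring lra.
Set Implicit Arguments. Unset Strict Implicit. Unset Printing Implicit Defensive.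
Import GRing.Theory.
Local Open Scope ring_scope.

Definition z0 n : Pn n := ord0.
Definition tp n : Pn n := ord_max.
Lemma atm_lt n (i : 'I_n) : (i.+1 < n.+2)%N.
Proof. by rewrite ltnS leqW. Qed.
Definition atm n (i : 'I_n) : Pn n := Ordinal (atm_lt i).

Lemma sumPn n (V : zmodType) (F : Pn n -> V) :
  \sum_(x : Pn n) F x = F (z0 n) + \sum_(i < n) F (atm i) + F (tp n).
Proof.
rewrite big_ord_recl big_ord_recr /= addrA.
congr (_ + _ + _); last by congr F; apply: val_inj.
by apply: eq_bigr => i _; congr F; apply: val_inj.
Qed.

Variant Pn_spec n : Pn n -> Type :=
| PnZ : Pn_spec (z0 n)
| PnA i : Pn_spec (atm i)
| PnT : Pn_spec (tp n).

Lemma PnP n (x : Pn n) : Pn_spec x.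
Proof.
case: x => [[|k] Hk].
  have -> : Ordinal Hk = z0 n by apply: val_inj.
  exact: PnZ.
have [Hkn|Hkn] := ltnP k n.
  have -> : Ordinal Hk = atm (Ordinal Hkn) by apply: val_inj.
  exact: PnA.
have -> : Ordinal Hk = tp n; last exact: PnT.
apply: val_inj => /=; apply/eqP; rewrite eqSS eqn_leq Hkn andbT; exact: Hk.
Qed.

Lemma atm_neq n (i : 'I_n) : (val i == n) = false.
Proof. exact: ltn_eqF (ltn_ord i). Qed.

Lemma le_z n (x : Pn n) : pn_le (z0 n) x. Proof. by rewrite /pn_le /= orbT. Qed.
Lemma le_t n (x : Pn n) : pn_le x (tp n). Proof. by rewrite /pn_le /= eqxx !orbT. Qed.
Lemma le_xz n (x : Pn n) : pn_le x (z0 n) = (x == z0 n).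
Proof. case: (PnP x) => [|i|]; rewrite /pn_le -!val_eqE /= ?eqxx // ?eqSS ?atm_neq ?[n == _]eq_sym ?atm_neq //; reflexivity. Qed.
Lemma le_tx n (x : Pn n) : pn_le (tp n) x = (x == tp n).
Proof. case: (PnP x) => [|i|]; rewrite /pn_le -!val_eqE /= ?eqxx // ?eqSS ?atm_neq ?[n == _]eq_sym ?atm_neq //; reflexivity. Qed.
Lemma le_aa n (i j : 'I_n) : pn_le (atm i) (atm j) = (i == j).
Proof. by rewrite /pn_le -!val_eqE /= !eqSS atm_neq orbF. Qed.
Lemma eq_az n (i : 'I_n) : (atm i == z0 n) = false. Proof. by []. Qed.
Lemma eq_za n (i : 'I_n) : (z0 n == atm i) = false. Proof. by []. Qed.
Lemma eq_at n (i : 'I_n) : (atm i == tp n) = false. Proof. by rewrite -val_eqE /= eqSS atm_neq. Qed.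
Lemma eq_ta n (i : 'I_n) : (tp n == atm i) = false. Proof. by rewrite eq_sym eq_at. Qed.
Lemma eq_zt n : (z0 n == tp n) = false. Proof. by []. Qed.
Lemma eq_tz n : (tp n == z0 n) = false. Proof. by []. Qed.
Lemma eq_aa n (i j : 'I_n) : (atm i == atm j) = (i == j).
Proof. by rewrite -val_eqE /=. Qed.
Lemma rk_z n : pn_rk (z0 n) = 0%N. Proof. by []. Qed.
Lemma rk_t n : pn_rk (tp n) = 2%N. Proof. by rewrite /pn_rk /= eqxx. Qed.
Lemma rk_a n (i : 'I_n) : pn_rk (atm i) = 1%N. Proof. by rewrite /pn_rk /= eqSS atm_neq. Qed.
Lemma rkP n : pn_rkP n = 2%N.
Proof.
apply/eqP; rewrite eqn_leq; apply/andP; split.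
  apply/bigmax_leqP => x _; rewrite /pn_rk; by case: ifP => // _; case: ifP.
by have := @leq_bigmax _ (fun x : Pn n => pn_rk x) (tp n); rewrite rk_t.
Qed.

Lemma sumPc n (V : zmodType) (P : pred (Pn n)) (F : Pn n -> V) :
  \sum_(x : Pn n | P x) F x = (if P (z0 n) then F (z0 n) else 0)
    + \sum_(i < n) (if P (atm i) then F (atm i) else 0)
    + (if P (tp n) then F (tp n) else 0).
Proof. by rewrite big_mkcond sumPn. Qed.

Lemma sumA_eq n (V : zmodType) (j : 'I_n) (F : 'I_n -> V) :
  \sum_(i < n) (if i == j then F i else 0) = F j.
Proof. by rewrite -big_mkcond big_pred1_eq. Qed.
Lemma sumA_eq' n (V : zmodType) (j : 'I_n) (F : 'I_n -> V) :
  \sum_(i < n) (if j == i then F i else 0) = F j.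
Proof. by under eq_bigr => i _ do rewrite eq_sym; apply: sumA_eq. Qed.
Lemma sumA0 n (V : zmodType) : \sum_(i < n) (0 : V) = 0.
Proof. by rewrite big1. Qed.

Ltac simpP := rewrite ?le_z ?le_t ?le_xz ?le_tx ?le_aa ?eq_az ?eq_za ?eq_at ?eq_ta ?eq_zt ?eq_tz ?eq_aa ?eqxx /=.
Ltac simpS := simpP; try (under eq_bigr => ? _ do simpP); rewrite ?sumA_eq ?sumA_eq' ?sumA0.



Lemma andb_eqs (T : eqType) (a b : T) : ((a == b) && (b == a)) = (b == a).
Proof. by rewrite eq_sym andbb. Qed.
Ltac simpP ::= rewrite ?le_z ?le_t ?le_xz ?le_tx ?le_aa ?eq_az ?eq_za ?eq_at ?eq_ta ?eq_zt ?eq_tz ?eq_aa ?eqxx ?andb_eqs ?andbT ?andTb ?andbF ?andFb /=.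
Ltac sI := rewrite sumPc; simpP; under eq_bigr => ? _ do simpP; rewrite ?sumA_eq ?sumA_eq' ?sumA0 ?addr0 ?add0r.

Section SI.
Variables (n : nat) (V : zmodType) (F : Pn n -> V).
Lemma sI_zz : \sum_(a | pn_le (z0 n) a && pn_le a (z0 n)) F a = F (z0 n).
Proof. by sI. Qed.
Lemma sI_za j : \sum_(a | pn_le (z0 n) a && pn_le a (atm j)) F a = F (z0 n) + F (atm j).
Proof. by sI. Qed.
Lemma sI_zt : \sum_(a | pn_le (z0 n) a && pn_le a (tp n)) F a = F (z0 n) + \sum_(i < n) F (atm i) + F (tp n).
Proof. by sI. Qed.
Lemma sI_aa j : \sum_(a | pn_le (atm j) a && pn_le a (atm j)) F a = F (atm j).
Proof. by sI. Qed.
Lemma sI_at j : \sum_(a | pn_le (atm j) a && pn_le a (tp n)) F a = F (atm j) + F (tp n).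
Proof. by sI. Qed.
Lemma sI_tt : \sum_(a | pn_le (tp n) a && pn_le a (tp n)) F a = F (tp n).
Proof. by sI. Qed.
End SI.
Ltac sIs := rewrite ?sI_zz ?sI_za ?sI_zt ?sI_aa ?sI_at ?sI_tt.
Ltac crunch := under eq_bigr => ? _ do sIs; sIs; rewrite /delta3; simpP.

Section U.
Variables (n : nat) (J : Pn n -> Pn n -> Pn n -> int).
Hypothesis H : IsJ J.
Local Notation z := (z0 n).
Local Notation t := (tp n).

Lemma L1 : J z z z = 1.
Proof. by have := H (le_z z) (le_z z); crunch. Qed.
Lemma L2 j : J z z (atm j) = -1.
Proof. have := H (le_z z) (le_z (atm j)); crunch; rewrite L1; lia. Qed.
Lemma L3 : J z z t = n%:R - 1.
Proof. have := H (le_z z) (le_z t); crunch; rewrite L1.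
under eq_bigr => i _ do rewrite L2. rewrite sumr_const card_ord mulNrn. lia. Qed.
Lemma L4 j : J (atm j) (atm j) (atm j) = 1.
Proof. have := H (x:=atm j) (y := atm j) (z := atm j); rewrite le_aa eqxx => /(_ isT isT). by crunch. Qed.
Lemma L5 j : J z (atm j) (atm j) = -1.
Proof. have := @H z (atm j) (atm j) (le_z _); rewrite le_aa eqxx => /(_ isT); crunch; rewrite L4; lia. Qed.
Lemma L6 j : J (atm j) (atm j) t = -1.
Proof. have := @H (atm j) (atm j) t; rewrite le_aa eqxx => /(_ isT (le_t _)); crunch; rewrite L4; lia. Qed.
Lemma L7 j : J z (atm j) t = 1.
Proof. have := H (le_z (atm j)) (le_t (atm j)); crunch; rewrite L4 L5 L6; lia. Qed.
Lemma L8 : J t t t = 1.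
Proof. by have := H (le_t t) (le_t t); crunch. Qed.
Lemma L9 j : J (atm j) t t = -1.
Proof. have := H (le_t (atm j)) (le_t t); crunch; rewrite L8; lia. Qed.
Lemma L10 : J z t t = n%:R - 1.
Proof. have := H (le_z t) (le_t t); crunch; rewrite L8.
under eq_bigr => i _ do rewrite L9. rewrite sumr_const card_ord mulNrn. lia. Qed.
End U.

Definition mu n (x y : Pn n) : int :=
  if x == y then 1 else if (x == z0 n) && (y == tp n) then n%:R - 1 else -1.
Lemma mu_xx n (x : Pn n) : mu x x = 1. Proof. by rewrite /mu eqxx. Qed.
Lemma mu_za n (j : 'I_n) : mu (z0 n) (atm j) = -1. Proof. by rewrite /mu; simpP. Qed.
Lemma mu_at n (j : 'I_n) : mu (atm j) (tp n) = -1. Proof. by rewrite /mu; simpP. Qed.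
Lemma mu_zt n : mu (z0 n) (tp n) = n%:R - 1. Proof. by rewrite /mu; simpP. Qed.
Ltac muS := rewrite ?mu_xx ?mu_za ?mu_at ?mu_zt.

Lemma J0_IsJ n : @IsJ n (fun x y w => mu x y * mu y w).
Proof.
move=> x y w; case: (PnP y) => [|j|]; case: (PnP x) => [|i|]; case: (PnP w) => [|k|]; simpP => // h1 h2;
repeat match goal with h : is_true (_ == _) |- _ => move/eqP: h => h; subst end;
crunch; (try under eq_bigr => ? _ do muS); muS; rewrite ?sumr_const ?card_ord ?mulNrn; lia.
Qed.

Section SU.
Variables (n : nat) (V : zmodType) (F : Pn n -> V).
Lemma sU_z : \sum_(a | pn_le (z0 n) a) F a = F (z0 n) + \sum_(i < n) F (atm i) + F (tp n).
Proof. by sI. Qed.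
Lemma sU_a j : \sum_(a | pn_le (atm j) a) F a = F (atm j) + F (tp n).
Proof. by sI. Qed.
Lemma sU_t : \sum_(a | pn_le (tp n) a) F a = F (tp n).
Proof. by sI. Qed.
End SU.
Ltac sUs := rewrite ?sU_z ?sU_a ?sU_t.

Lemma sum_andl n (V : zmodType) (b : bool) (P : pred (Pn n)) (F : Pn n -> V) :
  \sum_(w | b && P w) F w = if b then \sum_(w | P w) F w else 0.
Proof. by case: b => //; rewrite big_pred0_eq. Qed.

Section Inner.
Variables (n : nat) (V : zmodType) (G : Pn n -> Pn n -> Pn n -> V).
Local Notation z := (z0 n).
Local Notation t := (tp n).
Lemma inner_z : \sum_(y : Pn n) \sum_(w | pn_le z y && pn_le y w) G z y w =
  (G z z z + \sum_(j < n) G z z (atm j) + G z z t) +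
  \sum_(j < n) (G z (atm j) (atm j) + G z (atm j) t) + G z t t.
Proof. rewrite sumPn; simpP; sUs; under [X in _ + X + _]eq_bigr => ? _ do sUs; by []. Qed.
Lemma inner_a i : \sum_(y : Pn n) \sum_(w | pn_le (atm i) y && pn_le y w) G (atm i) y w =
  G (atm i) (atm i) (atm i) + G (atm i) (atm i) t + G (atm i) t t.
Proof.
rewrite sumPn; simpP; sUs; under [X in _ + X + _]eq_bigr => ? _ do (rewrite sum_andl le_aa).
by rewrite big_pred0_eq sumA_eq' sU_a add0r.
Qed.
Lemma inner_t : \sum_(y : Pn n) \sum_(w | pn_le t y && pn_le y w) G t y w = G t t t.
Proof.
rewrite sumPn; simpP; sUs; under [X in _ + X + _]eq_bigr => ? _ do (simpP; rewrite ?big_pred0_eq).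
by rewrite big_pred0_eq sumA0 !add0r.
Qed.
End Inner.

Lemma rhoE n (x y w : Pn n) : pn_rho x y w = (6 - pn_rk x - pn_rk y - pn_rk w)%N.
Proof. by rewrite /pn_rho rkP. Qed.
Ltac rkS := rewrite ?rhoE ?rk_z ?rk_a ?rk_t /=.

Lemma Mval n J : @IsJ n J -> 
    @Mpoly n J = ('X^2 - n%:R *: 'X + 1) * ('X + 1) ^+ 2 * ('X - 1) ^+ 2.
Proof.
move=> H; rewrite /Mpoly sumPn.
rewrite (inner_z (fun x y w => (J x y w)%:P * 'X^(pn_rho x y w))).
rewrite (inner_t (fun x y w => (J x y w)%:P * 'X^(pn_rho x y w))).
under [X in _ + _ + _ + _ + _ + X + _ = _]eq_bigr => i _ do
  rewrite (inner_a (fun x y w => (J x y w)%:P * 'X^(pn_rho x y w))) (L4 H) (L6 H) (L9 H) !rhoE rk_a rk_t.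
under [X in _ + X + _ + _ + _ + _ + _ = _]eq_bigr => i _ do
  rewrite (L2 H) !rhoE rk_a rk_z.
under [X in _ + _ + _ + X + _ + _ + _ = _]eq_bigr => i _ do
  rewrite (L5 H) (L7 H) !rhoE rk_a rk_z rk_t.
rewrite (L1 H) (L3 H) (L8 H) (L10 H) !rhoE ?rk_z ?rk_t /=.
rewrite !sumr_const card_ord !subn0 !subn1 !subn2 /=.
rewrite -mul_polyC polyCB polyCN polyC1 polyC_natr.
ring.
Qed.

Theorem proposition6p9 (n : nat) (hn : (2 <= n)%N) :
  (exists J, @IsJ n J) /\
  forall J : Pn n -> Pn n -> Pn n -> int, @IsJ n J ->
    @Mpoly n J = ('X^2 - n%:R *: 'X + 1) * ('X + 1) ^+ 2 * ('X - 1) ^+ 2.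
Proof.
split; first by exists (fun x y w => mu x y * mu y w); exact: J0_IsJ.
exact: Mval.
Qed.
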